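(* Let $A\in\mathbb{R}^{m\times n}$ and $x\in\mathbb{R}^n$. Let $L\subseteq\mathrm{supp}(x)$ and $S\subseteq[n]\setminus L$. If there is no circuit $C\subseteq\mathrm{supp}(x)$ with $C\cap S\ne\emptyset$, then \[\|x_S\|_\infty\le\kappa_A\min_{z\in\ker(A)+x}\|z_{[n]\setminus\operatorname{cl}(L)}\|_1.\]
   Context: An elementary vector of $\ker(A)$ is a nonzero $g\in\ker(A)$ with inclusion-minimal support among nonzero vectors of $\ker(A)$; a circuit is the support of an elementary vector (equivalently, a circuit of the linear matroid of the columns of $A$). The circuit imbalance is $\kappa_A=\max\{|g_i|/|g_j|: g \text{ elementary},\ i,j\in\mathrm{supp}(g)\}$. For $S\subseteq[n]$, $\operatorname{rk}(S)=\operatorname{rk}(A_S)$ where $A_S$ is the column submatrix, and $\operatorname{cl}(S)=\{i\in[n]:\operatorname{rk}(S\cup\{i\})=\operatorname{rk}(S)\}$. $x_S$ is the restriction of $x$ to coordinates in $S$. *)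

(* Defs.v *)
From HB Require Import structures.
From mathcomp Require Import all_boot all_order all_algebra.
From mathcomp Require Import classical_sets reals.
Set Implicit Arguments. Unset Strict Implicit. Unset Printing Implicit Defensive.
Import Order.TTheory GRing.Theory Num.Theory.
Local Open Scope ring_scope.

Section Defs.
Variables (R : realType) (m n : nat).
Implicit Types (A : 'M[R]_(m, n)) (g x : 'cV[R]_n) (S : {set 'I_n}).

Definition supp x : {set 'I_n} := [set i | x i 0 != 0].

Definition inker A g : Prop := A *m g = 0.

Definition elementary A g : Prop :=
  [/\ g != 0, inker A g &
      forall h, inker A h -> h != 0 -> supp h \subset supp g -> supp h = supp g].

Definition circuit A (C : {set 'I_n}) : Prop :=
  exists g, elementary A g /\ supp g = C.

(* column submatrix A_S, represented by zeroing the columns outside S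
   (same rank as the genuine column submatrix) *)
Definition colrestr A S : 'M[R]_(m, n) :=
  \matrix_(i, j) (if j \in S then A i j else 0).

Definition rk A S : nat := \rank (colrestr A S).

Definition cl A S : {set 'I_n} := [set i | rk A (i |: S) == rk A S].

(* circuit imbalance; the value 1 is included so that kappa_A = 1 when
   ker(A) has no elementary vectors (standard convention; otherwise the
   i = j ratio already contributes 1). *)
Definition kappa A : R :=
  sup [set r : R | r = 1 \/
        exists g i j, [/\ elementary A g, i \in supp g, j \in supp g &
                          r = `|g i 0| / `|g j 0|] ].

Definition norminf_on x S : R := \big[Num.max/0]_(i in S) `|x i 0|.
Definition norm1_on x S : R := \sum_(i in S) `|x i 0|.
End Defs.

(* Main.v *)
Require Import Defs.
From HB Require Import structures.
From mathcomp Require Import all_boot all_order all_algebra.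
From mathcomp Require Import classical_sets reals.
From mathcomp Require Import boolp ring.
Import Order.TTheory GRing.Theory Num.Theory.
Local Open Scope ring_scope.
Set Implicit Arguments. Unset Strict Implicit. Unset Printing Implicit Defensive.


Lemma inkerD (R : realType) m n (A : 'M[R]_(m,n)) u v :
  inker A u -> inker A v -> inker A (u + v).
Proof. by rewrite /inker mulmxDr => -> ->; rewrite addr0. Qed.

Lemma inkerZ (R : realType) m n (A : 'M[R]_(m,n)) (c : R) u :
  inker A u -> inker A (c *: u).
Proof. by rewrite /inker -scalemxAr => ->; rewrite scaler0. Qed.

Lemma inkerN (R : realType) m n (A : 'M[R]_(m,n)) u :
  inker A u -> inker A (- u).
Proof. by rewrite /inker mulmxN => ->; rewrite oppr0. Qed.

Lemma inkerB (R : realType) m n (A : 'M[R]_(m,n)) u v :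
  inker A u -> inker A v -> inker A (u - v).
Proof. by move=> hu hv; apply: inkerD => //; apply: inkerN. Qed.

Lemma suppE (R : realType) n (x : 'cV[R]_n) i : (i \in supp x) = (x i 0 != 0).
Proof. by rewrite inE. Qed.

Lemma nz_entry (R : realType) n (x : 'cV[R]_n) : x != 0 -> exists j, x j 0 != 0.
Proof.
move=> hx; apply/existsP; apply: contraNT hx => /existsPn H.
apply/eqP/matrixP => i k; rewrite ord1 mxE; exact/eqP/negPn/H.
Qed.

Lemma supp_scale (R : realType) n (x : 'cV[R]_n) c : c != 0 -> supp (c *: x) = supp x.
Proof. by move=> hc; apply/setP => i; rewrite !suppE mxE mulf_eq0 negb_or hc. Qed.


Lemma smaller (R : realType) n (u y : 'cV[R]_n) (c : 'I_n -> R) k :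
  (forall j, u j 0 = c j * y j 0) -> c k = 0 -> y k 0 != 0 ->
  (#|supp u| < #|supp y|)%N.
Proof.
move=> hu ck yk; apply: proper_card; rewrite finset.properEneq; apply/andP; split.
  apply/eqP => /setP /(_ k); rewrite !suppE hu ck mul0r eqxx yk //.
apply/fintype.subsetP => j; rewrite !suppE hu mulf_eq0 negb_or => /andP[_ ->] //.
Qed.

Lemma abs_split (R : realType) (c1 c2 a : R) : 0 <= c1 -> 0 <= c2 -> c1 + c2 = 1 ->
  `|a| = `|c1 * a| + `|c2 * a|.
Proof.
move=> h1 h2 hs; rewrite !normrM (ger0_norm h1) (ger0_norm h2) -mulrDl hs mul1r //.
Qed.

Lemma decomp (R : realType) m n (A : 'M[R]_(m,n)) (y h : 'cV[R]_n) :
  inker A y -> inker A h -> h != 0 -> supp h \subset supp y -> supp h != supp y ->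
  exists v w, [/\ inker A v, inker A w, (#|supp v| < #|supp y|)%N,
     (#|supp w| < #|supp y|)%N & forall j, `|y j 0| = `|v j 0| + `|w j 0|].
Proof.
move=> hy.
wlog hpos: h / exists j, 0 < h j 0 / y j 0.
  move=> W hh hn hsub hne; have [j hj] := nz_entry hn.
  have yj : y j 0 != 0.
    by move: (fintype.subsetP hsub j); rewrite !suppE => /(_ hj).
  have : h j 0 / y j 0 != 0 by rewrite mulf_neq0 // invr_eq0.
  rewrite neq_lt => /orP [hlt|hgt].
  - have e : supp (- h) = supp h by rewrite -scaleN1r supp_scale // oppr_eq0 oner_eq0.
    apply: (W (- h)); rewrite ?e //.
    + by exists j; rewrite mxE mulNr oppr_gt0.
    + exact: inkerN.
    + by rewrite oppr_eq0.
  - by apply: (W h) => //; exists j.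
move=> hh hn hsub hne; case: hpos => j0 hj0.
pose r := fun j => h j 0 / y j 0.
have hr j : h j 0 = r j * y j 0.
  case: (eqVneq (y j 0) 0) => [y0|ny0]; last by rewrite /r divfK.
  rewrite y0 mulr0; apply/eqP; apply/negPn/negP => hj.
  by move: (fintype.subsetP hsub j); rewrite !suppE y0 eqxx => /(_ hj).
have ysupp j : r j != 0 -> y j 0 != 0.
  by apply: contraNN => /eqP y0; rewrite /r y0 invr0 mulr0.
case: (@arg_maxP _ R _ j0 predT r isT) => jM _ hM.
case: (@arg_minP _ R _ j0 predT r isT) => jm _ hm.
set M := r jM; set mm := r jm.
have Mpos : 0 < M by apply: lt_le_trans hj0 (hM _ isT).
have Mn0 : M != 0 by rewrite gt_eqF.
pose v := y - M^-1 *: h.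
have hv j : v j 0 = (1 - M^-1 * r j) * y j 0 by rewrite !mxE hr mulrBl mul1r mulrA.
have cv j : 0 <= 1 - M^-1 * r j.
  by rewrite subr_ge0 mulrC ler_pdivrMr // mul1r; apply: hM.
have cvM : 1 - M^-1 * M = 0 by rewrite mulVf // subrr.
have kv : inker A v by apply: inkerB => //; apply: inkerZ.
have sv : (#|supp v| < #|supp y|)%N.
  by apply: (smaller hv cvM); apply: ysupp.
case: (leP 0 mm) => hmm.
- exists v, (M^-1 *: h); split => //.
  + exact: inkerZ.
  + by rewrite supp_scale ?invr_eq0 // proper_card // finset.properEneq hne.
  + move=> j; rewrite hv mxE (hr j) (mulrA M^-1 (r j)).
    apply: (@abs_split _ (1 - M^-1 * r j) (M^-1 * r j)) => //.
      rewrite mulr_ge0 // ?invr_ge0 ?(ltW Mpos) //; exact: le_trans hmm (hm _ isT).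
    by rewrite subrK.
- have mn0 : mm != 0 by rewrite lt_eqF.
  have dpos : 0 < M - mm by rewrite subr_gt0; apply: lt_trans Mpos.
  have dn0 : M - mm != 0 by rewrite gt_eqF.
  pose w := y - mm^-1 *: h.
  have hw j : w j 0 = (1 - mm^-1 * r j) * y j 0 by rewrite !mxE hr mulrBl mul1r mulrA.
  have cw j : 0 <= 1 - mm^-1 * r j.
    have hmj := hm j isT; move: hmj; set rj := r j => hmj.
    by rewrite subr_ge0 mulrC ler_ndivrMr // mul1r.
  exists ((M / (M - mm)) *: v), ((- mm / (M - mm)) *: w); split.
  + exact: inkerZ.
  + by apply: inkerZ; apply: inkerB => //; apply: inkerZ.
  + by rewrite supp_scale // mulf_neq0 // invr_eq0.
  + rewrite supp_scale; last by rewrite mulf_neq0 ?oppr_eq0 // invr_eq0.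
    apply: (@smaller _ _ _ _ _ jm hw); first by rewrite -/mm mulVf // subrr.
    by apply: ysupp; rewrite -/mm.
  + move=> j; rewrite [(_ *: v) j 0]mxE [(_ *: w) j 0]mxE hv hw.
    rewrite (mulrA (M / (M - mm))) (mulrA (- mm / (M - mm))).
    apply: abs_split.
    * have h1 : 0 <= M / (M - mm) by rewrite divr_ge0 // ltW.
      exact: mulr_ge0 h1 (cv j).
    * have h1 : 0 <= - mm / (M - mm) by rewrite divr_ge0 // ?oppr_ge0 ltW.
      exact: mulr_ge0 h1 (cw j).
    * by field; rewrite Mn0 mn0 dn0.
Qed.


Lemma supp_of_abs (R : realType) n (y v w : 'cV[R]_n) :
  (forall j, `|y j 0| = `|v j 0| + `|w j 0|) -> supp v \subset supp y.
Proof.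
move=> hs; apply/fintype.subsetP => j; rewrite !suppE; apply: contraNN => /eqP y0.
move: (hs j); rewrite y0 normr0 => /esym/eqP; rewrite paddr_eq0 ?normr_ge0 //.
by case/andP; rewrite normr_eq0.
Qed.

Lemma term_le_sum (R : realType) n (U : {set 'I_n}) (F : 'I_n -> R) u :
  (forall j, 0 <= F j) -> u \in U -> F u <= \sum_(j in U) F j.
Proof.
move=> F0 uU; rewrite (bigD1 u) //= lerDl; exact: sumr_ge0.
Qed.

Lemma mainQ (R : realType) m n (A : 'M[R]_(m,n)) (k : R) : 0 <= k ->
  (forall g i j, elementary A g -> i \in supp g -> j \in supp g ->
      `|g i 0| <= k * `|g j 0|) ->
  forall N y, (#|supp y| <= N)%N -> inker A y -> forall i (U : {set 'I_n}),
  (forall C, circuit A C -> C \subset supp y -> i \in C -> ~~ [disjoint C & U]) ->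
  `|y i 0| <= k * \sum_(j in U) `|y j 0|.
Proof.
move=> k0 hk; elim=> [|N IH] y hN hy i U hC.
  case: (eqVneq (y i 0) 0) => [->|yi].
    by rewrite normr0 mulr_ge0 // sumr_ge0.
  have : (0 < #|supp y|)%N by apply/card_gt0P; exists i; rewrite suppE.
  by rewrite lt0n -leqn0 hN.
case: (eqVneq (y i 0) 0) => [->|yi].
  by rewrite normr0 mulr_ge0 // sumr_ge0.
have [[h [hh hn hsub hne]]|H] :=
  pselect (exists h, [/\ inker A h, h != 0, supp h \subset supp y & supp h != supp y]).
  have [v [w [kv kw sv sw hs]]] := decomp hy hh hn hsub hne.
  have vy : supp v \subset supp y := supp_of_abs hs.
  have wy : supp w \subset supp y.
    by apply: (@supp_of_abs _ _ _ _ v) => j; rewrite addrC.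
  have hv := IH v (leq_trans sv hN) kv i U.
  have hw := IH w (leq_trans sw hN) kw i U.
  have -> : \sum_(j in U) `|y j 0| = \sum_(j in U) `|v j 0| + \sum_(j in U) `|w j 0|.
    by rewrite -big_split; apply: eq_bigr => j _; exact: hs.
  rewrite hs mulrDr; apply: lerD.
    by apply: hv => C hCc hCs; apply: hC => //; exact: fintype.subset_trans hCs vy.
  by apply: hw => C hCc hCs; apply: hC => //; exact: fintype.subset_trans hCs wy.
have ey : elementary A y.
  split => //.
    by apply/eqP => y0; move: yi; rewrite y0 mxE eqxx.
  move=> h hh hn hs; apply/eqP/negP => hne; apply: H; exists h; split => //.
  exact/negP.
have iy : i \in supp y by rewrite suppE.
have := hC (supp y) (ex_intro _ y (conj ey erefl)) (subxx _) iy.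
rewrite -setI_eq0 => /set0Pn [u]; rewrite inE => /andP [uy uU].
apply: le_trans (hk _ _ _ ey iy uy) _.
by apply: ler_wpM2l => //; apply: (@term_le_sum _ _ _ (fun j => `|y j 0|)).
Qed.


Lemma elem_prop (R : realType) m n (A : 'M[R]_(m,n)) g g' :
  elementary A g -> elementary A g' -> supp g = supp g' ->
  exists c : R, c != 0 /\ g' = c *: g.
Proof.
move=> [gn0 kg mg] [g'n0 kg' _] es.
have [j gj] := nz_entry gn0.
have g'j : g' j 0 != 0 by rewrite -suppE -es suppE.
pose c := g' j 0 / g j 0.
exists c; split; first by rewrite mulf_neq0 // invr_eq0.
pose d := g' - c *: g.
have kd : inker A d by apply: inkerB => //; apply: inkerZ.
have dj : d j 0 = 0 by rewrite !mxE /c divfK // subrr.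
case: (eqVneq d 0) => [d0|dn0].
  by apply/eqP; rewrite -subr_eq0 -/d d0.
have sd : supp d \subset supp g.
  apply/fintype.subsetP => l; rewrite suppE => dl; apply/negPn/negP => lg.
  have gl : g l 0 = 0 by apply/eqP; move: lg; rewrite suppE negbK.
  have g'l : g' l 0 = 0 by apply/eqP; move: lg; rewrite es suppE negbK.
  by move: dl; rewrite !mxE g'l gl mulr0 subrr eqxx.
have := mg d kd dn0 sd => /setP /(_ j); rewrite !suppE dj eqxx gj //.
Qed.

Lemma ratio_eq (R : realType) m n (A : 'M[R]_(m,n)) g g' i j :
  elementary A g -> elementary A g' -> supp g = supp g' ->
  `|g' i 0| / `|g' j 0| = `|g i 0| / `|g j 0|.
Proof.
move=> eg eg' es; have [c [cn0 ->]] := elem_prop eg eg' es.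
rewrite !mxE !normrM invfM mulrACA mulfV ?mul1r // normr_eq0 //.
Qed.

Definition kset (R : realType) m n (A : 'M[R]_(m,n)) : set R :=
  [set r : R | r = 1 \/
        exists g i j, [/\ elementary A g, i \in supp g, j \in supp g &
                          r = `|g i 0| / `|g j 0|] ].

Lemma kappa_has_sup (R : realType) m n (A : 'M[R]_(m,n)) : has_sup (kset A).
Proof.
split; first by exists 1; left.
pose rep (C : {set 'I_n}) := xget 0 (fun g : 'cV[R]_n => elementary A g /\ supp g = C).
pose F (p : {set 'I_n} * 'I_n * 'I_n) := `|rep p.1.1 p.1.2 0| / `|rep p.1.1 p.2 0|.
have F0 p : 0 <= F p by rewrite divr_ge0.
have Fs p : F p <= \sum_q F q.
  by rewrite (bigD1 p) //= lerDl; apply: sumr_ge0.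
exists (1 + \sum_q F q) => r [->|[g [i [j [eg ig jg ->]]]]].
  by rewrite lerDl sumr_ge0.
have [er sr] : elementary A (rep (supp g)) /\ supp (rep (supp g)) = supp g.
  exact: (@xgetPex _ 0 (fun g0 : 'cV[R]_n => elementary A g0 /\ supp g0 = supp g)
           (ex_intro _ g (conj eg erefl))).
rewrite (ratio_eq i j er eg sr).
apply: le_trans (Fs (supp g, i, j)) _; rewrite lerDr //.
Qed.

Lemma kappa_ge1 (R : realType) m n (A : 'M[R]_(m,n)) : 1 <= kappa A.
Proof. by apply: (sup_upper_bound (kappa_has_sup A)); left. Qed.

Lemma kappa_ratio (R : realType) m n (A : 'M[R]_(m,n)) g i j :
  elementary A g -> i \in supp g -> j \in supp g ->
  `|g i 0| <= kappa A * `|g j 0|.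
Proof.
move=> eg ig jg.
have gj : 0 < `|g j 0| by rewrite normr_gt0 -suppE.
rewrite -ler_pdivrMr //.
by apply: (sup_upper_bound (kappa_has_sup A)); right; exists g, i, j.
Qed.


Lemma cl_span (R : realType) m n (A : 'M[R]_(m,n)) (L : {set 'I_n}) j :
  j \in cl A L -> exists q : 'cV[R]_n,
    (forall l, l \notin L -> q l 0 = 0) /\ A *m q = A *m delta_mx j 0.
Proof.
rewrite inE /rk => /eqP hr.
set B := colrestr A L; set B' := colrestr A (j |: L).
have sub : (B^T <= B'^T)%MS.
  apply/row_subP => l; case: (boolP (l \in L)) => hl.
    have -> : row l B^T = row l B'^T.
      by apply/rowP => i; rewrite !mxE in_setU1 hl orbT.
    exact: row_sub.
  have -> : row l B^T = 0 by apply/rowP => i; rewrite !mxE (negbTE hl).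
  exact: sub0mx.
have sub' : (B'^T <= B^T)%MS.
  by rewrite -(mxrank_leqif_sup sub).2 !mxrank_tr hr.
have /submxP [u hu] := submx_trans (row_sub j B'^T) sub'.
exists (\col_l (if l \in L then u 0 l else 0)); split.
  by move=> l hl; rewrite mxE (negbTE hl).
apply/matrixP => i k; rewrite ord1 -colE !mxE.
have := congr1 (fun M : 'M[R]_(1,m) => M 0 i) hu; rewrite !mxE in_setU1 eqxx /= => ->.
apply: eq_bigr => l _; rewrite !mxE; case: (l \in L); last by rewrite !mulr0.
by rewrite mulrC.
Qed.


Lemma sub_sum (R : realType) n (U T : {set 'I_n}) (F : 'I_n -> R) :
  (forall j, 0 <= F j) -> U \subset T -> \sum_(j in U) F j <= \sum_(j in T) F j.
Proof.
move=> F0 UT; rewrite [X in _ <= X](bigID (mem U)) /=.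
have -> : \sum_(i in T | i \in U) F i = \sum_(i in U) F i.
  apply: eq_bigl => j /=; case: (boolP (j \in U)) => jU; rewrite ?andbT ?andbF //.
  exact: (fintype.subsetP UT).
by rewrite lerDl sumr_ge0.
Qed.

Unset Implicit Arguments.
Theorem lemma2p7 (R : realType) (m n : nat) (A : 'M[R]_(m, n)) (x : 'cV[R]_n)
    (L S : {set 'I_n}) :
  L \subset supp x ->
  S \subset ~: L ->
  (forall C : {set 'I_n}, circuit A C -> C \subset supp x -> [disjoint C & S]) ->
  forall z : 'cV[R]_n, inker A (z - x) ->
    norminf_on x S <= kappa A * norm1_on z (~: cl A L).
Proof.
move=> hL hS hC z hz.
set T := ~: cl A L.
set k := kappa A.
have k1 : 1 <= k := kappa_ge1 A.
have k0 : 0 <= k by apply: le_trans k1.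
pose qf j := xget 0 (fun q : 'cV[R]_n =>
   (forall l, l \notin L -> q l 0 = 0) /\ A *m q = A *m delta_mx j 0).
have hq j : j \in cl A L ->
    (forall l, l \notin L -> qf j l 0 = 0) /\ A *m qf j = A *m delta_mx j 0.
  move=> hj; have [q hq] := cl_span hj.
  exact: (@xgetPex _ 0 (fun q : 'cV[R]_n =>
   (forall l, l \notin L -> q l 0 = 0) /\ A *m q = A *m delta_mx j 0) (ex_intro _ q hq)).
set D := cl A L :\: L.
have LcL : L \subset cl A L.
  apply/fintype.subsetP => l hl; rewrite inE.
  have e : (l |: L) = L.
    by apply/finset.setUidPr; rewrite finset.sub1set.
  by rewrite e.
have TL l : l \in T -> l \notin L.
  rewrite inE => lT; apply: contraNN lT; exact: (fintype.subsetP LcL).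
pose p := \sum_(j in D) z j 0 *: (delta_mx j 0 : 'cV[R]_n).
pose qq := \sum_(j in D) z j 0 *: qf j.
have Apq : A *m p = A *m qq.
  rewrite !mulmx_sumr; apply: eq_bigr => j; rewrite finset.in_setD => /andP[_ hj].
  by rewrite -!scalemxAr (hq j hj).2.
have pE l : p l 0 = if l \in D then z l 0 else 0.
  rewrite summxE; under eq_bigr => j _ do rewrite !mxE eqxx andbT.
  case: (boolP (l \in D)) => hl.
    rewrite (bigD1 l) //= eqxx mulr1 big1 ?addr0 // => j /andP[_ /negbTE].
    by rewrite eq_sym => ->; rewrite mulr0.
  rewrite big1 // => j hj.
  have /negbTE -> : l != j by apply: contraNneq hl => ->.
  by rewrite mulr0.
have qqE l : l \notin L -> qq l 0 = 0.
  move=> hl; rewrite summxE big1 // => j; rewrite finset.in_setD => /andP[_ hj].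
  by rewrite mxE (hq j hj).1 ?mulr0.
clearbody p qq.
pose z' := z - p + qq.
have ky : inker A (x - z').
  have Azx : A *m z = A *m x by apply/eqP; rewrite -subr_eq0 -mulmxBr hz.
  by rewrite /inker /z' mulmxBr mulmxDr mulmxBr Apq subrK Azx subrr.
have z'T l : l \in T -> z' l 0 = z l 0.
  move=> lT; rewrite !mxE pE qqE ?TL //.
  have -> : (l \in D) = false.
    by rewrite finset.in_setD; move: lT; rewrite inE => /negbTE ->; rewrite andbF.
  by rewrite subr0 addr0.
have z'D l : l \in D -> z' l 0 = 0.
  move=> lD; move: (lD); rewrite finset.in_setD => /andP[lL _].
  by rewrite !mxE pE qqE // lD subrr addr0.
clearbody z'.
set y := x - z'.
set U := [set l in T | x l 0 == 0].
have yU l : l \in U -> `|y l 0| = `|z l 0|.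
  rewrite inE => /andP[lT /eqP xl].
  by rewrite !mxE xl sub0r normrN z'T.
apply: bigmax_le => [|i iS]; first by rewrite mulr_ge0 // sumr_ge0.
case: (eqVneq (x i 0) 0) => [->|xi].
  by rewrite normr0 mulr_ge0 // sumr_ge0.
have iL : i \notin L.
  by have := fintype.subsetP hS i iS; rewrite inE.
have hyp : forall C, circuit A C -> C \subset supp y -> i \in C -> ~~ [disjoint C & U].
  move=> C cC sC iC; apply/negP => dCU.
  have : C \subset supp x.
    apply/fintype.subsetP => l lC.
    have ly := fintype.subsetP sC l lC.
    rewrite suppE; apply/negP => /eqP x0.
    case: (boolP (l \in T)) => lT.
      have lU : l \in U by rewrite inE lT x0 eqxx.
      by move: (disjointFr dCU lC); rewrite lU.
    case: (boolP (l \in L)) => lL.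
      by move: (fintype.subsetP hL l lL); rewrite suppE x0 eqxx.
    have lD : l \in D by rewrite finset.in_setD lL; move: lT; rewrite inE negbK.
    by move: ly; rewrite suppE !mxE z'D // x0 subrr eqxx.
  move=> /(hC C cC) dCS.
  by move: (disjointFr dCS iC); rewrite iS.
have Q := mainQ k0 (@kappa_ratio _ _ _ A) (leqnn _) ky hyp.
rewrite (eq_bigr (fun l => `|z l 0|)) in Q; last by move=> l; apply: yU.
have UT : U \subset T by apply/fintype.subsetP => l; rewrite inE => /andP[].
rewrite /norm1_on -/T.
case: (boolP (i \in T)) => iT.
  have -> : x i 0 = y i 0 + z' i 0 by rewrite !mxE subrK.
  apply: le_trans (ler_normD _ _) _.
  have iU : i \notin U by rewrite inE negb_and xi orbT.
  have iUT : i |: U \subset T by rewrite finset.subUset finset.sub1set iT UT.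
  apply: le_trans _ (ler_wpM2l k0 (@sub_sum _ _ _ _ (fun j => `|z j 0|) (fun j => normr_ge0 (z j 0)) iUT)).
  rewrite big_setU1 //= mulrDr addrC z'T //; apply: lerD => //.
  by rewrite -{1}[`|z i 0|]mul1r ler_wpM2r.
have iD : i \in D by rewrite finset.in_setD iL; move: iT; rewrite inE negbK.
have -> : x i 0 = y i 0 by rewrite !mxE z'D // subr0.
apply: le_trans Q _.
by apply: ler_wpM2l => //; apply: sub_sum.

Qed.
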